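(* Let $D$ be an instance all of whose tuples are endogenous, let $\mathcal{Q}$ be a monotone query (defining a view $\mathcal{V}$ with $\mathcal{V}(D)=\mathcal{Q}(D)$), and let $\bar a\in\mathcal{Q}(D)$. Then for $D'\subseteq D$, we have $(D,D',\bar a)\in\mathcal{MSSEP}^{s}(\mathcal{Q})$ if and only if there is $t\in D\smallsetminus D'$ such that $t\in\mathit{Causes}(D,\mathcal{Q}(\bar a))$ and $D\smallsetminus(D'\cup\{t\})\in\mathit{Cont}(D,\mathcal{Q}(\bar a),t)$.
   Context: A query $\mathcal{Q}$ is monotone if $D_1\subseteq D_2$ implies $\mathcal{Q}(D_1)\subseteq\mathcal{Q}(D_2)$; $D\models\mathcal{Q}(\bar a)$ means $\bar a\in\mathcal{Q}(D)$. Here $D^n=D$ (all tuples endogenous). A tuple $\tau\in D^n$ is an actual cause for $\bar a$ if there is $\Gamma\subseteq D^n$ with $D\smallsetminus\Gamma\models\mathcal{Q}(\bar a)$ and $D\smallsetminus(\Gamma\cup\{\tau\})\not\models\mathcal{Q}(\bar a)$; $\mathit{Causes}(D,\mathcal{Q}(\bar a))$ is the set of actual causes. $\mathit{Cont}(D,\mathcal{Q}(\bar a),\tau)$ is the set of $\Lambda\subseteq D^n$ with $D\smallsetminus\Lambda\models\mathcal{Q}(\bar a)$, $D\smallsetminus(\Lambda\cup\{\tau\})\not\models\mathcal{Q}(\bar a)$, and $D\smallsetminus(\Lambda'\cup\{\tau\})\models\mathcal{Q}(\bar a)$ for every $\Lambda'\subsetneq\Lambda$. $\mathcal{MSSEP}^{s}(\mathcal{Q})$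 is the set of triples $(D,D',\bar a)$ with $\bar a\in\mathcal{Q}(D)$, $D'\subseteq D$, $\bar a\notin\mathcal{Q}(D')$, and $D'$ subset-maximal among subsets of $D$ with this last property (minimal source-side-effect). *)

(* Defs.v *)
From mathcomp Require Import all_boot.
Set Implicit Arguments. Unset Strict Implicit. Unset Printing Implicit Defensive.

(* Tuples (facts) range over a finite type T; a database instance is a
   finite set of facts D : {set T}. A query Q maps an instance to the set of
   its answers: [Q D a] means D |= Q(a). All tuples are endogenous (D^n = D). *)

Definition monotone (T : finType) (Ans : Type) (Q : {set T} -> Ans -> bool) :=
  forall D1 D2 : {set T}, D1 \subset D2 -> forall a, Q D1 a -> Q D2 a.

Definition is_cause (T : finType) (Ans : Type) (Q : {set T} -> Ans -> bool)
  (D : {set T}) (a : Ans) (tau : T) : Prop :=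
  tau \in D /\
  exists Gamma : {set T}, Gamma \subset D /\
    Q (D :\: Gamma) a /\ ~~ Q (D :\: (Gamma :|: [set tau])) a.

Definition Causes (T : finType) (Ans : Type) (Q : {set T} -> Ans -> bool)
  (D : {set T}) (a : Ans) : T -> Prop := is_cause Q D a.

Definition Cont (T : finType) (Ans : Type) (Q : {set T} -> Ans -> bool)
  (D : {set T}) (a : Ans) (tau : T) (Lambda : {set T}) : Prop :=
  Lambda \subset D /\
  Q (D :\: Lambda) a /\ ~~ Q (D :\: (Lambda :|: [set tau])) a /\
  forall Lambda' : {set T}, Lambda' \proper Lambda ->
    Q (D :\: (Lambda' :|: [set tau])) a.

Definition MSSEP (T : finType) (Ans : Type) (Q : {set T} -> Ans -> bool)
  (D D' : {set T}) (a : Ans) : Prop :=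
  Q D a /\ D' \subset D /\ ~~ Q D' a /\
  forall D'' : {set T}, D' \subset D'' -> D'' \subset D -> ~~ Q D'' a -> D'' = D'.

(* Main.v *)
Require Import Defs.
From mathcomp Require Import all_boot.

Lemma L1 (T : finType) (D D' : {set T}) t : t \in D -> D' \subset D ->
  D :\: (D :\: (D' :|: [set t])) = D' :|: [set t].
Proof.
move=> tD /subsetP s; apply/setP=> y; rewrite !inE.
case: (eqVneq y t) => [->|_]; rewrite ?tD ?andbT ?orbT //=.
case yD': (y \in D'); last by case: (y \in D).
by rewrite (s _ yD').
Qed.

Lemma L2 (T : finType) (D D' : {set T}) t : t \notin D' -> D' \subset D ->
  D :\: ((D :\: (D' :|: [set t])) :|: [set t]) = D'.
Proof.
move=> tD /subsetP s; apply/setP=> y; rewrite !inE.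
case: (eqVneq y t) => [->|_] /=; first by rewrite (negbTE tD).
case yD': (y \in D'); last by case: (y \in D).
by rewrite (s _ yD').
Qed.

Theorem proposition7 (T : finType) (Ans : Type) (Q : {set T} -> Ans -> bool)
  (D : {set T}) (a : Ans) :
  monotone Q -> Q D a ->
  forall D' : {set T}, D' \subset D ->
    (MSSEP Q D D' a <->
     exists2 t, t \in D :\: D' &
       Causes Q D a t /\ Cont Q D a t (D :\: (D' :|: [set t]))).
Proof.
move=> mon QD D' sD'; split.
- case=> _ [_ [nQD' maxD']].
  have [t tDD'] : exists t, t \in D :\: D'.
    apply/set0Pn; apply: (contraNneq _ nQD') => e.
    have ee : D' = D.
      by apply/eqP; rewrite eqEsubset sD' /= -setD_eq0 e.
    by rewrite ee.
  move: (tDD'); rewrite inE => /andP [tD' tD].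
  have QDt : Q (D' :|: [set t]) a.
    apply/negPn/negP => nq.
    have s2 : D' :|: [set t] \subset D by rewrite subUset sub1set tD sD'.
    have e := maxD' _ (subsetUl _ _) s2 nq.
    have : t \in D' :|: [set t] by rewrite !inE eqxx orbT.
    by rewrite e (negbTE tD').
  have Hsub : D :\: (D' :|: [set t]) \subset D by apply: subsetDl.
  exists t => //; split.
    split=> //; exists (D :\: (D' :|: [set t])); split=> //.
    by rewrite L1 // L2.
  split=> //; rewrite L1 // L2 //; split=> //; split=> //.
  move=> L' /properP [sL' [x xL xL']].
  apply/negPn/negP => nq.
  have s1 : D' \subset D :\: (L' :|: [set t]).
    apply/subsetP=> y yD'; rewrite !inE (subsetP sD' _ yD') andbT.
    apply/negP=> /orP [yL'|/eqP yt].
      by move: (subsetP sL' _ yL'); rewrite !inE yD'.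
    by move: tD'; rewrite -yt yD'.
  have e := maxD' _ s1 (subsetDl _ _) nq.
  move: xL; rewrite !inE => /andP [/norP [xD' xt] xD].
  have : x \in D :\: (L' :|: [set t]) by rewrite !inE xD andbT negb_or xL' xt.
  by rewrite e (negbTE xD').
- case=> t; rewrite inE => /andP [tD' tD] [_ [_ [Q1 [Q2 minL]]]].
  rewrite L1 // in Q1; rewrite L2 // in Q2.
  split=> //; split=> //; split=> //.
  move=> D'' s1 s2 nq; apply/eqP; rewrite eqEsubset andbC s1 /=.
  apply/subsetP=> x xD''; apply/negPn/negP=> xD'.
  have tD'' : t \notin D''.
    apply/negP=> tD''; move/negP: nq; apply; apply: (mon _ _ _ _ Q1).
    by rewrite subUset sub1set tD'' s1.
  have := minL (D :\: (D'' :|: [set t])).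
  rewrite L2 // (negbTE nq) => H; apply: notF; apply: H.
  apply/properP; split.
    apply/subsetP=> y; rewrite !inE => /andP [/norP [a1 a2] ->].
    rewrite andbT negb_or a2 andbT; apply: contra a1; exact: (subsetP s1).
  exists x.
    rewrite !inE (subsetP s2 _ xD'') andbT (negbTE xD') /=.
    by apply/eqP=> e; move: tD''; rewrite -e xD''.
  by rewrite !inE xD''.
Qed.
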